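(* Let $s\le k$ be positive integers and let $\tau_1,\dots,\tau_k\in(0,1]$ be distinct abscissae. Let $\omega_1,\dots,\omega_k$ be the weights of the interpolatory quadrature formula on $[0,1]$ based at these abscissae, i.e. $\omega_j=\int_0^1\ell_j(x)\,\mathrm{d}x$, where $\ell_j$ is the $j$th Lagrange polynomial of degree $k-1$ on the nodes $\{\tau_i\}$. Assume that this quadrature formula is exact for all polynomials of degree $2s-1$. Let $P_j(t)=\sqrt{2j-1}\,\hat P_{j-1}(t)$, $j\ge1$, where $\hat P_{j-1}$ is the shifted Legendre polynomial of degree $j-1$ on $[0,1]$ (so that $\int_0^1P_iP_j\,\mathrm{d}t=\delta_{ij}$). Define $\Omega=\mathrm{diag}(\omega_1,\dots,\omega_k)$ and the $k\times s$ matrices $\mathcal I_s,\mathcal P_s$ with entries $(\mathcal I_s)_{ij}=\int_0^{\tau_i}P_j(x)\,\mathrm{d}x$ and $(\mathcal P_s)_{ij}=P_j(\tau_i)$, and let $$A=\mathcal I_s\,\mathcal P_s^T\,\Omega\in\mathbb R^{k\times k}.$$ Then the nonzero eigenvalues of $A$ coincide with the eigenvalues of the Butcher matrix of the $s$-stage Gauss-Legendre Runge-Kutta method of order $2s$.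
   Context: The Butcher matrix of the $s$-stage Gauss-Legendre method of order $2s$ is the $s\times s$ matrix with entries $\int_0^{c_i}L_j(x)\,\mathrm{d}x$, where $c_1,\dots,c_s$ are the zeros of the shifted Legendre polynomial of degree $s$ on $[0,1]$ and $L_j$ is the $j$th Lagrange polynomial of degree $s-1$ on these nodes. The matrix $A$ is the Butcher matrix of the Runge-Kutta method called HBVM$(k,s)$ (Hamiltonian Boundary Value Method with $k$ steps and degree $s$) with abscissae $\tau_i$ and weights $\omega_i$. *)

(* Defs.v *)
From HB Require Import structures.
From mathcomp Require Import all_boot all_order all_algebra.
From mathcomp Require Import complex.
Set Implicit Arguments. Unset Strict Implicit. Unset Printing Implicit Defensive.
Import Order.TTheory GRing.Theory Num.Theory.
Local Open Scope ring_scope.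

Definition pint (R : fieldType) (p : {poly R}) (c : R) : R :=
  \sum_(i < size p) p`_i * c ^+ i.+1 / (i.+1)%:R.

Definition shLeg (R : nzRingType) (n : nat) : {poly R} :=
  \poly_(m < n.+1) ((-1) ^+ (n + m) * ('C(n, m) * 'C(n + m, m))%:R).

(* Normalized shifted Legendre polynomial P_{n+1} = sqrt(2n+1) hatP_n
   (0-based index n, i.e. P_j with j = n+1). *)
Definition normLeg (R : rcfType) (n : nat) : {poly R} :=
  Num.sqrt ((2 * n + 1)%:R : R) *: shLeg R n.

Definition lagr (R : fieldType) (m : nat) (t : 'I_m -> R) (j : 'I_m) : {poly R} :=
  \prod_(l < m | l != j) (('X - (t l)%:P) * ((t j - t l)^-1)%:P).

Definition quad_weight (R : fieldType) (m : nat) (t : 'I_m -> R) (j : 'I_m) : R :=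
  pint (lagr t j) 1.

Definition Imat (R : rcfType) (k s : nat) (tau : 'I_k -> R) : 'M[R]_(k, s) :=
  \matrix_(i < k, j < s) pint (normLeg R j) (tau i).

Definition Pmat (R : rcfType) (k s : nat) (tau : 'I_k -> R) : 'M[R]_(k, s) :=
  \matrix_(i < k, j < s) (normLeg R j).[tau i].

Definition Omega (R : fieldType) (k : nat) (tau : 'I_k -> R) : 'M[R]_k :=
  diag_mx (\row_(j < k) quad_weight tau j).

Definition hbvmA (R : rcfType) (k s : nat) (tau : 'I_k -> R) : 'M[R]_k :=
  Imat s tau *m (Pmat s tau)^T *m Omega tau.

(* Butcher matrix of a collocation method on nodes c: entries int_0^{c_i} L_j. *)
Definition collocA (R : fieldType) (s : nat) (c : 'I_s -> R) : 'M[R]_s :=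
  \matrix_(i < s, j < s) pint (lagr c j) (c i).

Definition toCmx (R : rcfType) (m : nat) (M : 'M[R]_m) : 'M[R[i]]_m :=
  map_mx (fun x => Complex x 0) M.

(* Main.v *)
Require Import Defs.
From HB Require Import structures.
From mathcomp Require Import all_boot all_order all_algebra.
From mathcomp Require Import complex.
Set Implicit Arguments. Unset Strict Implicit. Unset Printing Implicit Defensive.
Import Order.TTheory GRing.Theory Num.Theory.
Local Open Scope ring_scope.
From mathcomp Require Import ring lra zify.

Section Pint.
Variable R : rcfType.
Implicit Types (p q : {poly R}) (c : R).

Lemma pintE n p (c : R) : (size p <= n)%N ->
  pint p c = \sum_(i < n) p`_i * c ^+ i.+1 / (i.+1)%:R.
Proof.
move=> le; rewrite /pint (big_ord_widen n (fun i => p`_i * c ^+ i.+1 / (i.+1)%:R)) //.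
rewrite big_mkcond; apply: eq_bigr => i _; case: ltnP => // h.
by rewrite nth_default // !mul0r.
Qed.

Lemma pintD p q c : pint (p + q) c = pint p c + pint q c.
Proof.
set n := maxn (size p) (size q).
rewrite (@pintE n) ?(leq_trans (size_polyD _ _)) // (@pintE n p) ?leq_maxl //.
rewrite (@pintE n q) ?leq_maxr // -big_split; apply: eq_bigr => i _.
by rewrite coefD !mulrDl.
Qed.

Lemma pintZ a p c : pint (a *: p) c = a * pint p c.
Proof.
rewrite (@pintE (size p)) ?size_scale_leq // /pint mulr_sumr.
by apply: eq_bigr => i _; rewrite coefZ !mulrA.
Qed.

Lemma pintN p c : pint (- p) c = - pint p c.
Proof. by rewrite -scaleN1r pintZ mulN1r. Qed.

Lemma pintB p q c : pint (p - q) c = pint p c - pint q c.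
Proof. by rewrite pintD pintN. Qed.

Lemma pint0 c : pint 0 c = 0.
Proof. by rewrite /pint size_poly0 big_ord0. Qed.

Lemma pint_sum (I : finType) (F : I -> {poly R}) c :
  pint (\sum_i F i) c = \sum_i pint (F i) c.
Proof.
apply: (big_ind2 (fun p r => pint p c = r)); first exact: pint0.
  by move=> ? ? ? ? h1 h2; rewrite pintD h1 h2.
done.
Qed.

Lemma pint_deriv p c : pint p^`() c = p.[c] - p.[0].
Proof.
rewrite (@pintE (size p)); last by rewrite (leq_trans (size_poly _ _)) // leq_pred.
rewrite (@horner_coef_wide _ (size p).+1) // big_ord_recl horner_coef0 expr0 mulr1.
rewrite addrC addKr; apply: eq_bigr => i _; rewrite coef_deriv.
by rewrite -[p`_i.+1 *+ i.+1]mulr_natr mulrAC -mulrA -mulrA [X in _ * X]mulrA mulfV ?mul1r // pnatr_eq0.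
Qed.

Definition prim p : {poly R} :=
  \poly_(i < (size p).+1) (if i is j.+1 then p`_j / (j.+1)%:R else 0).

Lemma prim_horner p c : (prim p).[c] = pint p c.
Proof.
rewrite (@horner_coef_wide _ (size p).+1) ?size_poly // big_ord_recl coef_poly /= mul0r add0r.
apply: eq_bigr => i _; rewrite coef_poly /= ltnS ltn_ord.
by rewrite mulrAC.
Qed.

Lemma size_prim p : (size (prim p) <= (size p).+1)%N.
Proof. exact: size_poly. Qed.

Lemma ibp p q : pint (p * q^`()) 1 = (p * q).[1] - (p * q).[0] - pint (p^`() * q) 1.
Proof. by rewrite -pint_deriv derivM pintD [RHS]addrC addKr. Qed.

End Pint.
Section Leg.
Variable R : rcfType.
Implicit Types (p q : {poly R}) (c : R).

Definition wX : {poly R} := 'X * ('X - 1).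
Definition uP n : {poly R} := wX ^+ n.

Lemma wX0 : wX.[0] = 0.
Proof. by rewrite /wX hornerM hornerX mul0r. Qed.
Lemma wX1 : wX.[1] = 0.
Proof. by rewrite /wX hornerM hornerD hornerN hornerX hornerC subrr mulr0. Qed.

Lemma uP_derivs n i : (i <= n)%N -> exists r, (uP n)^`(i) = r * wX ^+ (n - i).
Proof.
elim: i => [|i IH] hi; first by exists 1; rewrite subn0 mul1r.
have [r hr] := IH (ltnW hi).
exists (r^`() * wX + r * wX^`() *+ (n - i)).
rewrite derivnS hr derivM deriv_exp -(subnSK hi) /= exprS.
rewrite mulrDl mulrA; congr (_ + _).
by rewrite -mulrnAl -mulrnAr mulrA.
Qed.

Lemma uP_vanish n m : (m < n)%N ->
  ((uP n)^`(m)).[0] = 0 /\ ((uP n)^`(m)).[1] = 0.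
Proof.
move=> hm; have [r hr] := uP_derivs (ltnW hm).
rewrite hr -(subnSK hm) exprS; split; rewrite hornerM [(_ * _).[_]]hornerM ?wX0 ?wX1 mul0r mulr0 //.
Qed.

Lemma ibp_step n m q : (m < n)%N ->
  pint (q * (uP n)^`(m.+1)) 1 = - pint (q^`() * (uP n)^`(m)) 1.
Proof.
move=> hm; have [h0 h1] := uP_vanish hm.
by rewrite derivnS ibp !hornerM h0 h1 !mulr0 subrr sub0r.
Qed.

Lemma ibp_iter n q i : (i <= n)%N ->
  pint (q * (uP n)^`(n)) 1 = (-1) ^+ i * pint (q^`(i) * (uP n)^`(n - i)) 1.
Proof.
elim: i => [|i IH] hi; first by rewrite expr0 mul1r subn0.
rewrite IH ?(ltnW hi) // -(subnSK hi) ibp_step; last first.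
  by rewrite ltn_subrL /=; case: n hi {IH}.
by rewrite -derivnS exprS mulNr mul1r mulrN mulNr.
Qed.
End Leg.
Section Rod.
Variable R : rcfType.
Implicit Types (p q : {poly R}) (c : R).

Lemma XsubnE n : ('X - 1 : {poly R}) ^+ n = \poly_(j < n.+1) ((-1) ^+ (n - j) * ('C(n, j))%:R).
Proof.
rewrite addrC exprDn poly_def; apply: eq_bigr => i _.
by rewrite -mul_polyC rmorphM /= rmorphXn /= rmorphN1 -mulr_natr polyC_natr mulrAC. Qed.

End Rod.
Section Rod2.
Variable R : rcfType.
Lemma rodrigues n : shLeg R n = (uP R n)^`N(n).
Proof.
apply/polyP => j; rewrite coef_nderivn /uP /wX exprMn XsubnE coefXnM.
rewrite ltnNge leq_addr /= addKn !coef_poly.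
case: ltnP => hj; last by rewrite mul0rn.
have hb : 'C(n + j, n) = 'C(n + j, j).
  by rewrite -bin_sub ?leq_addr // addKn.
rewrite hb -signr_odd oddD -(@signr_odd _ (n - j)%N) oddB //.
by rewrite -mulrnAr natrM mulrnAr mulr1.
Qed.
End Rod2.
Section Beta.
Variable R : rcfType.
Implicit Types (p q : {poly R}) (c : R).

Lemma pintXn a : pint ('X^a : {poly R}) 1 = ((a.+1)%:R)^-1.
Proof.
rewrite /pint size_polyXn big_ord_recr /= big1 ?add0r.
  by rewrite coefXn eqxx expr1n !mul1r.
by move=> i _; rewrite coefXn (ltn_eqF (ltn_ord i)) !mul0r.
Qed.

Lemma deriv_Xsub1 : (('X - 1 : {poly R}))^`() = 1.
Proof. by rewrite derivB derivX -polyC1 derivC subr0. Qed.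

Lemma pos1 (x : R) : 0 <= x -> 1 + x != 0.
Proof. by move=> hx; rewrite gt_eqF // ltr_pwDl. Qed.

Lemma beta a b : pint ('X^a * ('X - 1)^+b : {poly R}) 1 =
  (-1) ^+ b * ((a`! * b`!)%:R / ((a + b).+1)`!%:R).
Proof.
elim: b a => [|b IH] a.
  rewrite expr0 mulr1 pintXn mul1r addn0 factS fact0 muln1 natrM invfM.
  by rewrite mulrCA mulfV ?mulr1 // pnatr_eq0 -lt0n fact_gt0.
have hq : ('X^a : {poly R}) = (((a.+1)%:R)^-1 *: 'X^(a.+1))^`().
  by rewrite derivZ derivXn /= -scaler_nat scalerA mulVf ?pnatr_eq0 // scale1r.
have e1 : (('X - 1 : {poly R}) ^+ b.+1).[1] = 0.
  by rewrite horner_exp !hornerE subrr expr0n.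
have e0 : ((a.+1)%:R^-1 *: 'X^(a.+1) : {poly R}).[0] = 0.
  by rewrite hornerZ hornerXn expr0n /= mulr0.
rewrite [X in pint X]mulrC {1}hq ibp !hornerM e1 e0 mul0r mulr0 subrr sub0r.
have -> : (('X - 1) ^+ b.+1)^`() * ((a.+1)%:R^-1 *: 'X^(a.+1)) =
   ((b.+1)%:R * (a.+1)%:R^-1) *: ('X^(a.+1) * ('X - 1 : {poly R}) ^+ b).
  rewrite deriv_exp deriv_Xsub1 mul1r /= -scalerAr -scalerA scaler_nat.
  by rewrite scalerMnr mulrnAl [_ * 'X^_]mulrC.
rewrite (pintZ (R:=R)) IH addSnnS !factS !natrM exprS.
have h1 : (a.+1)%:R != 0 :> R by rewrite pnatr_eq0.
have h2 : (a`!)%:R != 0 :> R by rewrite pnatr_eq0 -lt0n fact_gt0.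
have h3 : ((a + b.+1).+1)`!%:R != 0 :> R by rewrite pnatr_eq0 -lt0n fact_gt0.
field.
rewrite pnatr_eq0 -lt0n fact_gt0 /= !pos1 ?addr_ge0 ?ler0n //.
Qed.
End Beta.
Section Orth.
Variable R : rcfType.
Implicit Types (p q : {poly R}) (c : R).

Lemma fact_neq0 n : (n`!)%:R != 0 :> R.
Proof. by rewrite pnatr_eq0 -lt0n fact_gt0. Qed.

Lemma nderivn_scale p n : p^`N(n) = ((n`!)%:R)^-1 *: p^`(n).
Proof. by rewrite nderivn_def -scaler_nat scalerA mulVf ?scale1r // fact_neq0. Qed.

Lemma shLeg_orth n q : (size q <= n)%N -> pint (q * shLeg R n) 1 = 0.
Proof.
move=> hq; rewrite rodrigues nderivn_scale -scalerAr pintZ (ibp_iter _ (leqnn n)).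
by rewrite subnn derivn0 derivn_poly0 // mul0r pint0 !mulr0.
Qed.

Lemma shLeg_size n : size (shLeg R n) = n.+1.
Proof.
rewrite /shLeg size_poly_eq // mulf_neq0 ?signr_eq0 // pnatr_eq0 muln_eq0.
by rewrite negb_or -!lt0n !bin_gt0 leqnn leq_addr.
Qed.

Lemma derivn_top p n : (size p <= n.+1)%N -> p^`(n) = (p`_n *+ n`!)%:P.
Proof.
move=> hp; apply/polyP => i; rewrite coef_derivn coefC.
case: i => [|i]; first by rewrite addn0 ffactnn.
by rewrite nth_default ?mul0rn // (leq_trans hp) // addnS ltnS leq_addr.
Qed.

Lemma shLeg_norm n : pint (shLeg R n * shLeg R n) 1 = (((n + n).+1)%:R)^-1.
Proof.
rewrite {2}rodrigues nderivn_scale -scalerAr pintZ (ibp_iter _ (leqnn n)).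
rewrite subnn derivn0 derivn_top ?shLeg_size // mul_polyC pintZ /uP /wX exprMn beta.
rewrite /shLeg coef_poly ltnSn binn mul1n.
have hs : (-1) ^+ (n + n) = 1 :> R by rewrite -signr_odd addnn odd_double.
have hs2 : (-1) ^+ n * (-1) ^+ n = 1 :> R by rewrite -exprD hs.
have hb : ('C(n + n, n))%:R * ((n`!)%:R * (n`!)%:R) = ((n + n)`!)%:R :> R.
  by have := bin_fact (leq_addr n n); rewrite ?addnK ?addKn -!natrM => ->.
rewrite hs mul1r factS natrM -mulr_natr natrM.
have h1 := fact_neq0 n; have h2 := fact_neq0 (n + n).
have h3 : (n + n).+1%:R != 0 :> R by rewrite pnatr_eq0.
have h4 : ('C(n + n, n))%:R != 0 :> R by rewrite pnatr_eq0 -lt0n bin_gt0 leq_addr.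
rewrite -hb !mul1r -(mulr_natr ('C(n + n, n))%:R).
move: hs2; set S := (-1) ^+ n => hs2.
rewrite [S * (_ * (S * _))]mulrCA [S * (S * _)]mulrA hs2 mul1r.
field.
by rewrite h1 h4 pos1 ?addr_ge0 ?ler0n.
Qed.
End Orth.
Section ON.
Variable R : rcfType.
Implicit Types (p q : {poly R}) (c : R).
Local Notation P := (normLeg R).

Lemma sqrt_neq0 n : Num.sqrt ((2 * n + 1)%:R : R) != 0.
Proof. by rewrite sqrtr_eq0 -ltNge ltr0n addn1. Qed.

Lemma normLeg_size n : size (P n) = n.+1.
Proof. by rewrite /normLeg size_scale ?sqrt_neq0 // shLeg_size. Qed.

Lemma normLeg_low q n : (size q <= n)%N -> pint (q * P n) 1 = 0.
Proof. by move=> h; rewrite /normLeg -scalerAr pintZ shLeg_orth // mulr0. Qed.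

Lemma normLeg_orth a b : pint (P a * P b) 1 = (a == b)%:R.
Proof.
have [hab|hab|<-] := ltngtP a b.
- by rewrite normLeg_low ?normLeg_size.
- by rewrite mulrC normLeg_low ?normLeg_size.
rewrite /normLeg -scalerAl -scalerAr !pintZ shLeg_norm mulrA -expr2 sqr_sqrtr ?ler0n //.
by rewrite mul2n -addnn addn1 mulfV // pnatr_eq0.
Qed.

Lemma normLeg_span N p : (size p <= N)%N ->
  p = \sum_(n < N) pint (P n * p) 1 *: P n.
Proof.
elim: N p => [|N IH] p hp.
  by rewrite big_ord0; apply/eqP; rewrite -size_poly_eq0 -leqn0.
set a := p`_N / (P N)`_N.
have hlc : (P N)`_N != 0.
  have : lead_coef (P N) != 0 by rewrite lead_coef_eq0 -size_poly_eq0 normLeg_size.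
  by rewrite lead_coefE normLeg_size.
have hp' : (size (p - a *: P N)%R <= N)%N.
  apply/leq_sizeP => j; rewrite leq_eqVlt => /orP [/eqP <-|hj].
    by rewrite coefB coefZ /a mulfVK // subrr.
  rewrite coefB coefZ !nth_default ?mulr0 ?subrr //.
    by rewrite normLeg_size.
  exact: leq_trans hp hj.
have e := IH _ hp'.
have ha : pint (P N * p) 1 = a.
  have -> : p = (p - a *: P N) + a *: P N by rewrite subrK.
  rewrite mulrDr pintD mulrC normLeg_low // -scalerAr pintZ normLeg_orth eqxx.
  by rewrite mulr1 add0r.
rewrite big_ord_recr /= ha -[p in LHS](subrK (a *: P N)) {1}e; congr (_ + _).
apply: eq_bigr => i _; congr (_ *: _).
rewrite mulrBr pintB -scalerAr pintZ normLeg_orth.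
by rewrite (ltn_eqF (ltn_ord i)) mulr0 subr0.
Qed.
End ON.
Section Lag.
Variable R : rcfType.
Variables (m : nat) (t : 'I_m -> R).
Hypothesis tinj : injective t.

Lemma lagr_eval i j : (lagr t j).[t i] = (i == j)%:R.
Proof.
rewrite /lagr horner_prod; have [->|hij] := eqVneq i j.
  rewrite big1 // => l hl; rewrite hornerM hornerC !hornerE mulfV // subr_eq0.
  by apply: contra hl => /eqP /tinj ->.
rewrite (bigD1 i) //= hornerM !hornerE subrr !mul0r //.
Qed.

Lemma lagr_size j : (size (lagr t j) <= m)%N.
Proof.
rewrite /lagr size_prod; last first.
  move=> l hl; rewrite mulf_neq0 ?polyXsubC_eq0 // polyC_eq0 invr_eq0 subr_eq0.
  by apply: contra hl => /eqP /tinj ->.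
rewrite (eq_bigr (fun _ => 2%N)); last first.
  move=> l hl; have hk : (t j - t l)^-1 != 0.
    by rewrite invr_eq0 subr_eq0; apply: contra hl => /eqP /tinj ->.
  by rewrite mulrC size_Mmonic ?monicXsubC ?polyC_eq0 // size_XsubC size_polyC hk.
rewrite sum_nat_const cardC1 card_ord.
have : (0 < m)%N by case: j => i hi; apply: leq_ltn_trans hi.
case: (m) => // n _ /=; rewrite muln2 -addnn subSn ?leq_addr // addnK //.
Qed.

Lemma lagrange (p : {poly R}) : (size p <= m)%N -> p = \sum_(j < m) p.[t j] *: lagr t j.
Proof.
move=> hp; apply/eqP; rewrite -subr_eq0; apply/eqP.
apply: (@roots_geq_poly_eq0 _ _ [seq t i | i <- enum 'I_m]).
- apply/allP => x /mapP [i _ ->]; rewrite /root hornerD hornerN horner_sum.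
  rewrite (bigD1 i) //= big1 ?addr0 => [|j hj].
    by rewrite hornerZ lagr_eval eqxx mulr1 subrr.
  by rewrite hornerZ lagr_eval eq_sym (negbTE hj) mulr0.
- by rewrite map_inj_uniq ?enum_uniq.
rewrite size_map size_enum_ord (leq_trans (size_polyD _ _)) //.
rewrite size_polyN geq_max hp /=.
apply: (leq_trans (size_sum _ _ _)); apply/bigmax_leqP => j _.
exact: leq_trans (size_scale_leq _ _) (lagr_size j).
Qed.
End Lag.
Section Eig.
Variable F : fieldType.

Lemma eig_MN_dir m n (M : 'M[F]_(m, n)) (N : 'M[F]_(n, m)) z : z != 0 ->
  eigenvalue (M *m N) z -> eigenvalue (N *m M) z.
Proof.
move=> hz /eigenvalueP [v hv nz]; apply/eigenvalueP; exists (v *m M).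
  by rewrite mulmxA -(mulmxA v) hv scalemxAl.
apply: contra nz => /eqP h; move: hv; rewrite mulmxA h mul0mx => /esym /eqP.
by rewrite scaler_eq0 (negbTE hz).
Qed.

Lemma eig_MN m n (M : 'M[F]_(m, n)) (N : 'M[F]_(n, m)) z : z != 0 ->
  eigenvalue (M *m N) z = eigenvalue (N *m M) z.
Proof. by move=> hz; apply/idP/idP; apply: eig_MN_dir. Qed.

Lemma eig_sim n (X Y V : 'M[F]_n) z : V \in unitmx -> X *m V = V *m Y ->
  eigenvalue X z = eigenvalue Y z.
Proof.
move=> hV hXY.
have eX : X = V *m Y *m invmx V by rewrite -hXY mulmxK.
apply/idP/idP => /eigenvalueP [v hv nz]; apply/eigenvalueP.
  exists (v *m V); first by rewrite -mulmxA -hXY mulmxA hv scalemxAl.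
  apply: contra nz => /eqP h; apply/eqP.
  by rewrite -(mulmxK hV v) h mul0mx.
exists (v *m invmx V).
  by rewrite eX !mulmxA mulmxKV // hv scalemxAl.
apply: contra nz => /eqP h; apply/eqP.
by rewrite -(mulmxKV hV v) h mul0mx.
Qed.
End Eig.

Lemma toCmxE (R : rcfType) n (M : 'M[R]_n) : toCmx M = map_mx (real_complex R) M.
Proof. by []. Qed.

Theorem theorem1 (R : rcfType) (k s : nat) (tau : 'I_k -> R)
  (hs : (0 < s)%N) (hsk : (s <= k)%N)
  (htau_inj : injective tau)
  (htau_range : forall i, 0 < tau i <= 1)
  (hexact : forall p : {poly R}, (size p <= 2 * s)%N ->
     pint p 1 = \sum_(j < k) quad_weight tau j * p.[tau j])
  (c : 'I_s -> R)
  (hc_inj : injective c)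
  (hc_root : forall i, root (shLeg R s) (c i)) :
  forall z : R[i], z != 0 ->
    (eigenvalue (toCmx (hbvmA s tau)) z = eigenvalue (toCmx (collocA c)) z).
Proof.
move=> z hz.
set Pn := normLeg R.
set G : 'M[R]_s := (Pmat s tau)^T *m Omega tau *m Imat s tau.
have e1 : eigenvalue (toCmx (hbvmA s tau)) z = eigenvalue (toCmx G) z.
  rewrite !toCmxE /hbvmA /G -(mulmxA (Imat s tau)) map_mxM [in RHS]map_mxM eig_MN //.

have hG : forall n m : 'I_s, G n m = pint (Pn n * prim (Pn m)) 1.
  move=> n m; rewrite hexact; last first.
    rewrite (leq_trans (size_mul_leq _ _)) // /Pn normLeg_size.
    have := size_prim (Pn m); rewrite /Pn normLeg_size => hpm.
    have hn := ltn_ord n; have hm := ltn_ord m; lia.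
  rewrite /G !mxE; apply: eq_bigr => l _.
  rewrite /Omega mul_mx_diag !mxE hornerM prim_horner.
  by rewrite mulrCA mulrA.
set V : 'M[R]_s := \matrix_(i < s, n < s) (Pn n).[c i].
have hCV : collocA c *m V = V *m G.
  apply/matrixP => i m; rewrite !mxE.
  have e2 : \sum_j collocA c i j * V j m = pint (Pn m) (c i).
    rewrite [in RHS](lagrange hc_inj (p := Pn m)); last by rewrite normLeg_size.
    rewrite pint_sum; apply: eq_bigr => j _; rewrite !mxE pintZ mulrC //.
  rewrite e2 -prim_horner {1}(@normLeg_span _ s.+1 (prim (Pn m))); last first.
    by rewrite (leq_trans (size_prim _)) // normLeg_size ltnS ltn_ord.
  rewrite horner_sum big_ord_recr /=.
  have h0 : (normLeg R s).[c i] = 0 by rewrite /normLeg hornerZ (eqP (hc_root i)) mulr0.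
  rewrite [X in _ + X]hornerZ h0 mulr0 addr0.
  by apply: eq_bigr => n _; rewrite hG /V mxE hornerZ mulrC.
have hV : V \in unitmx.
  rewrite -unitmx_tr -row_free_unit -kermx_eq0; apply/rowV0P => v /sub_kermxP hv.
  set q := \sum_(n < s) v 0 n *: Pn n.
  have hq0 : q = 0.
    apply: (@roots_geq_poly_eq0 _ _ [seq c i | i <- enum 'I_s]).
    - apply/allP => x /mapP [i _ ->]; rewrite /root.
      have -> : q.[c i] = (v *m V^T) ord0 i.
        rewrite /q horner_sum !mxE; apply: eq_bigr => n _; rewrite hornerZ !mxE //.
      by rewrite hv mxE.
    - by rewrite map_inj_uniq ?enum_uniq.
    rewrite size_map size_enum_ord.
    apply: (leq_trans (size_sum _ _ _)); apply/bigmax_leqP => n _.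
    by rewrite (leq_trans (size_scale_leq _ _)) // normLeg_size.
  apply/rowP => n; rewrite !mxE.
  have : pint (Pn n * q) 1 = v 0 n.
    rewrite /q mulr_sumr pint_sum (bigD1 n) //= big1 ?addr0.
      by rewrite -scalerAr pintZ normLeg_orth eqxx mulr1.
    move=> j hj; rewrite -scalerAr pintZ normLeg_orth.
    by rewrite eq_sym (negbTE hj : (j == n :> nat) = false) mulr0.
  by rewrite hq0 mulr0 pint0.
have e3 : eigenvalue (toCmx (collocA c)) z = eigenvalue (toCmx G) z.
  have hVC : toCmx V \in unitmx by rewrite toCmxE map_unitmx.
  have hCVC : toCmx (collocA c) *m toCmx V = toCmx V *m toCmx G.
    by rewrite !toCmxE -map_mxM hCV map_mxM.
  exact: (@eig_sim _ _ _ _ _ z hVC hCVC).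
rewrite e1 e3. 
reflexivity.
Qed.
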